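(* For all integers $n,k$ with $1\le k\le n-1$, $\Gamma_{\times k,t}(K_n\times K_2)=2k+2$.
   Context: For an integer $k\ge1$ and a graph $G$ with $\delta(G)\ge k$, a set $S\subseteq V(G)$ is a $k$-tuple total dominating set ($k$TDS) if $|N_G(x)\cap S|\ge k$ for every $x\in V(G)$, and $\Gamma_{\times k,t}(G)$ is the maximum cardinality of a minimal (with respect to inclusion) $k$TDS of $G$. The cross (direct) product $G\times H$ has vertex set $V(G)\times V(H)$, with $(g_1,h_1)\sim(g_2,h_2)$ iff $g_1g_2\in E(G)$ and $h_1h_2\in E(H)$. *)

(* Defs.v *)
From mathcomp Require Import all_boot.
Set Implicit Arguments. Unset Strict Implicit. Unset Printing Implicit Defensive.

(* A simple graph on a finite type T is given by an adjacency relation e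
   (assumed symmetric and irreflexive where relevant). *)

Definition nbhd (T : finType) (e : rel T) (x : T) : {set T} := [set y | e x y].

Definition is_kTDS (T : finType) (e : rel T) (k : nat) (S : {set T}) : bool :=
  [forall x, k <= #|nbhd e x :&: S|].

Definition is_minimal_kTDS (T : finType) (e : rel T) (k : nat) (S : {set T}) : bool :=
  is_kTDS e k S && [forall S' : {set T}, (S' \proper S) ==> ~~ is_kTDS e k S'].

Definition upper_ktuple_total_dom (T : finType) (e : rel T) (k : nat) : nat :=
  \max_(S : {set T} | is_minimal_kTDS e k S) #|S|.

Definition complete_graph (n : nat) : rel 'I_n := fun a b => a != b.

Definition cross_prod (T1 T2 : finType) (e1 : rel T1) (e2 : rel T2) : rel (T1 * T2) :=
  fun u v => e1 u.1 v.1 && e2 u.2 v.2.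

(* Main.v *)
Require Import Defs.
From mathcomp Require Import all_boot.
From mathcomp Require Import zify.
Set Implicit Arguments. Unset Strict Implicit. Unset Printing Implicit Defensive.

Section S.
Variable n : nat.
Local Notation V := ('I_n * 'I_2)%type.
Local Notation e := (cross_prod (@complete_graph n) (@complete_graph 2)).
Definition sl (S : {set V}) (b : 'I_2) : {set 'I_n} := [set a | (a, b) \in S].
Definition o0 : 'I_2 := ord0.
Definition o1 : 'I_2 := ord_max.

Lemma I2_three (b b' c : 'I_2) : b != b' -> c != b -> c = b'.
Proof.
by case: b => [[|[|?]] ?] //; case: b' => [[|[|?]] ?] //; case: c => [[|[|?]] ?] //=;
  move=> *; apply: val_inj.
Qed.

Lemma I2_cases (b : 'I_2) : b = o0 \/ b = o1.
Proof. by case: b => [[|[|?]] ?] //; [left|right]; apply: val_inj. Qed.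

Lemma nbhd_card (S : {set V}) (a : 'I_n) (b b' : 'I_2) : b != b' ->
  #|nbhd e (a, b) :&: S| = #|sl S b' :\ a|.
Proof.
move=> hbb.
have -> : nbhd e (a, b) :&: S = [set (x, b') | x in sl S b' :\ a].
  apply/setP => -[a' c].
  rewrite !inE /cross_prod /complete_graph /=.
  case: (eqVneq c b') => [->|hc].
    rewrite mem_imset; last by move=> ? ? [].
    by rewrite !inE hbb andbT eq_sym.
  apply/idP/idP => [/andP[/andP[_ hbc] _]|/imsetP[x _ [_ hcb]]].
    by rewrite eq_sym in hbc; rewrite (I2_three hbb hbc) eqxx in hc.
  by rewrite hcb eqxx in hc.
by rewrite card_imset // => ? ? [].
Qed.

Lemma card_sl (S : {set V}) : #|S| = #|sl S o0| + #|sl S o1|.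
Proof.
have HS : S = [set (x, o0) | x in sl S o0] :|: [set (x, o1) | x in sl S o1].
  apply/setP => -[a c]; rewrite !inE.
  case: (I2_cases c) => ->.
    rewrite mem_imset; last by move=> ? ? [].
    rewrite !inE.
    by apply/idP/idP => [->//|/orP[//|/imsetP[x _ [_]]]].
  rewrite [X in _ || X]mem_imset; last by move=> ? ? [].
  rewrite !inE.
  by apply/idP/idP => [->|/orP[/imsetP[x _ [_]]|//]]; rewrite ?orbT.
rewrite {1}HS cardsU !card_imset; try by move=> ? ? [].
have -> : [set (x, o0) | x in sl S o0] :&: [set (x, o1) | x in sl S o1] = set0.
  apply/setP => y; rewrite !inE.
  apply/negbTE; apply/andP => -[/imsetP [x _ ->] /imsetP [x' _ []]].
  done.
by rewrite cards0 subn0.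
Qed.

Lemma sl_sub (S' S : {set V}) b : S' \subset S -> sl S' b \subset sl S b.
Proof. by move=> /subsetP h; apply/subsetP => a; rewrite !inE => /h. Qed.

Lemma all_minus (k : nat) (A : {set 'I_n}) : 0 < k -> 0 < n ->
  (forall a, k <= #|A :\ a|) <-> k < #|A|.
Proof.
move=> k0 n0; split.
  case: (set_0Vmem A) => [->|[a ha] h].
    move=> /(_ (Ordinal n0)); rewrite set0D cards0 leqn0 => /eqP k00.
    by rewrite k00 in k0.
  by have := h a; rewrite (cardsD1 a A) ha.
move=> hA a; move: hA; rewrite (cardsD1 a A).
by case: (a \in A) => /=; [rewrite add1n ltnS | rewrite add0n => /ltnW].
Qed.

Lemma kTDS_iff (k : nat) (S : {set V}) : 0 < k -> 0 < n ->
  is_kTDS e k S = (k < #|sl S o0|) && (k < #|sl S o1|).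
Proof.
move=> k0 n0.
have h01 : o0 != o1 by [].
apply/idP/idP.
  move=> /forallP h; apply/andP; split.
    apply/(all_minus _ k0 n0) => a.
    by have := h (a, o1); rewrite (@nbhd_card S a o1 o0).
  apply/(all_minus _ k0 n0) => a.
  by have := h (a, o0); rewrite (nbhd_card _ _ h01).
move=> /andP [/(all_minus _ k0 n0) h0 /(all_minus _ k0 n0) h1].
apply/forallP => -[a c]; case: (I2_cases c) => ->.
  by rewrite (nbhd_card _ _ h01).
by rewrite (@nbhd_card S a o1 o0).
Qed.

Lemma kTDS_all (k : nat) (S : {set V}) : 0 < k -> 0 < n ->
  is_kTDS e k S = [forall b, k < #|sl S b|].
Proof.
move=> k0 n0; rewrite kTDS_iff //.
apply/andP/forallP => [[h0 h1] b|h]; last by split; apply: h.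
by case: (I2_cases b) => ->.
Qed.

Lemma sl_D1 (S : {set V}) a b c :
  sl (S :\ (a, b)) c = if c == b then sl S c :\ a else sl S c.
Proof.
apply/setP => x; case: (eqVneq c b) => [->|hcb]; rewrite !inE xpair_eqE.
  by rewrite eqxx andbT.
by rewrite (negbTE hcb) andbF.
Qed.

Lemma minimal_sl (k : nat) (S : {set V}) b : 0 < k -> 0 < n ->
  is_minimal_kTDS e k S -> #|sl S b| = k.+1.
Proof.
move=> k0 n0 /andP [hT /forallP hmin].
have hall := hT; rewrite kTDS_all // in hall.
have hb : k < #|sl S b| := forallP hall b.
apply/eqP; rewrite eqn_leq hb andbT leqNgt; apply/negP => hgt.
have : 0 < #|sl S b| by apply: leq_ltn_trans hgt.
rewrite card_gt0 => /set0Pn [a ha].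
have haS : (a, b) \in S by move: ha; rewrite inE.
have := hmin (S :\ (a, b)); rewrite properD1 //= kTDS_all //.
move/negP; apply; apply/forallP => c; rewrite sl_D1.
case: (eqVneq c b) => [->|_]; last exact: forallP hall c.
move: hgt; rewrite (cardsD1 a (sl S b)) ha add1n.
by rewrite ltnS.
Qed.
End S.

Theorem mainTheorem15 (n k : nat) (hk1 : 1 <= k) (hkn : k <= n - 1) :
  upper_ktuple_total_dom (cross_prod (@complete_graph n) (@complete_graph 2)) k
  = 2 * k + 2.
Proof.
have k0 : 0 < k by [].
have n0 : 0 < n by lia.
have hkn' : k.+1 <= n by lia.
pose A : {set 'I_n} := [set a : 'I_n | a < k.+1].
have cardA : #|A| = k.+1.
  have -> : A = [set widen_ord hkn' i | i : 'I_k.+1].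
    apply/setP => a; rewrite inE; apply/idP/imsetP => [ha|[i _ ->]]; last by rewrite /= ltn_ord.
    by exists (Ordinal ha) => //; apply: val_inj.
  by rewrite card_imset ?card_ord // => i j /(congr1 val) /= ij; apply: val_inj.
pose T : {set 'I_n * 'I_2} := [set x | x.1 \in A].
have slT b : sl T b = A by apply/setP => a; rewrite !inE.
have hTm : is_minimal_kTDS (cross_prod (@complete_graph n) (@complete_graph 2)) k T.
  apply/andP; split.
    by rewrite kTDS_all //; apply/forallP => b; rewrite slT cardA.
  apply/forallP => S'; apply/implyP => /proper_card hlt.
  rewrite kTDS_all //; apply/negP => /forallP h.
  move: hlt; rewrite !card_sl !slT cardA.
  have := h o0; have := h o1; move=> h1 h0.
  by rewrite ltnNge (leq_add h0 h1).
apply/eqP; rewrite eqn_leq; apply/andP; split.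
  apply/bigmax_leqP => S hS.
  rewrite card_sl (@minimal_sl n k S o0 k0 n0 hS) (@minimal_sl n k S o1 k0 n0 hS); lia.
have := @leq_bigmax_cond _ (is_minimal_kTDS (cross_prod (@complete_graph n) (@complete_graph 2)) k) (fun S : {set _} => #|S|) T hTm.
rewrite /upper_ktuple_total_dom card_sl !slT cardA => H.
apply: leq_trans H; lia.
Qed.
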